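(* Let $V$ be a nonempty finite subset of $\mathbb{R}^n$ and $W$ a nonempty finite subset of $\mathbb{R}^n\setminus\{0\}$. Let $L=\operatorname{conv}(V)+\operatorname{cone}(W)$ and $f\in\operatorname{int}(L)$. For $t\in\mathbb{N}$ let $L_t=\operatorname{conv}(V\cup(f+tW))$. Then $f\in\operatorname{int}(L_t)$ for every $t\in\mathbb{N}$, the sequence $(L_t)_{t=1}^\infty$ is increasing with respect to inclusion, and $d_f(L_t,L)\to0$ as $t\to\infty$.
   Context: For $X\subseteq\mathbb{R}^n$, the polar is $X^\circ=\{r\in\mathbb{R}^n:r\cdot x\le1\ \forall x\in X\}$. For closed convex sets $B_1,B_2\subseteq\mathbb{R}^n$ containing $f$ in their interiors, $d_f(B_1,B_2)=d_H((B_1-f)^\circ,(B_2-f)^\circ)$, where $d_H$ is the Hausdorff metric on nonempty compact sets. *)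

(* Defs.v *)
From HB Require Import structures.
From mathcomp Require Import all_boot all_order all_algebra.
From mathcomp Require Import all_classical all_reals all_analysis.
Set Implicit Arguments. Unset Strict Implicit. Unset Printing Implicit Defensive.
Import Order.TTheory GRing.Theory Num.Theory.
Import numFieldNormedType.Exports.
Local Open Scope classical_set_scope.
Local Open Scope ring_scope.

Section Defs.
Context {R : realType} {n : nat}.
Local Notation vec := 'rV[R]_n.

Definition dotv (r x : vec) : R := \sum_(i < n) r 0 i * x 0 i.

Definition enorm (x : vec) : R := Num.sqrt (dotv x x).

Definition convhull (S : set vec) : set vec :=
  [set p | exists (k : nat) (x : 'I_k -> vec) (l : 'I_k -> R),
      (forall i, S (x i)) /\ (forall i, 0 <= l i) /\ \sum_(i < k) l i = 1 /\
      p = \sum_(i < k) l i *: x i].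

Definition conehull (S : set vec) : set vec :=
  [set p | exists (k : nat) (x : 'I_k -> vec) (l : 'I_k -> R),
      (forall i, S (x i)) /\ (forall i, 0 <= l i) /\
      p = \sum_(i < k) l i *: x i].

Definition minkowski_sum (A B : set vec) : set vec := [set a + b | a in A & b in B].

Definition translate (A : set vec) (f : vec) : set vec := [set a - f | a in A].

Definition polar (X : set vec) : set vec :=
  [set r | forall x, X x -> dotv r x <= 1].

(* On nonempty compact sets
   this is the usual Hausdorff metric. *)
Definition hausdorff (A B : set vec) : \bar R :=
  ereal_inf [set (e%:E)%E | e in
    [set e : R | 0 <= e /\
       (forall a, A a -> exists2 b, B b & enorm (a - b) <= e) /\
       (forall b, B b -> exists2 a, A a & enorm (a - b) <= e)]].

Definition dist_f (f : vec) (B1 B2 : set vec) : \bar R :=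
  hausdorff (polar (translate B1 f)) (polar (translate B2 f)).

End Defs.

(* Main.v *)
Require Import Defs.
From HB Require Import structures.
From mathcomp Require Import all_boot all_order all_algebra.
From mathcomp Require Import all_classical all_reals all_analysis.
From mathcomp Require Import ring lra.
Import Order.TTheory GRing.Theory Num.Theory.
Import numFieldNormedType.Exports.
Local Open Scope classical_set_scope.
Local Open Scope ring_scope.

Section Aux.
Context {R : realType} {n : nat}.
Local Notation vec := 'rV[R]_n.

Definition ocons {A : Type} {k : nat} (a : A) (g : 'I_k -> A) : 'I_k.+1 -> A :=
  fun i => if unlift ord0 i is Some j then g j else a.
Lemma ocons0 {A : Type} {k : nat} (a : A) (g : 'I_k -> A) : ocons a g ord0 = a.
Proof. by rewrite /ocons unlift_none. Qed.
Lemma oconsS {A : Type} {k : nat} (a : A) (g : 'I_k -> A) i : ocons a g (lift ord0 i) = g i.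
Proof. by rewrite /ocons liftK. Qed.

Lemma dotvD (r x y : vec) : dotv r (x + y) = dotv r x + dotv r y.
Proof. by rewrite /dotv -big_split; apply: eq_bigr => i _; rewrite mxE mulrDr. Qed.
Lemma dotvZ (r : vec) a x : dotv r (a *: x) = a * dotv r x.
Proof. by rewrite /dotv mulr_sumr; apply: eq_bigr => i _; rewrite mxE mulrCA. Qed.
Lemma dotvN (r x : vec) : dotv r (- x) = - dotv r x.
Proof. by rewrite -scaleN1r dotvZ mulN1r. Qed.
Lemma dotvB (r x y : vec) : dotv r (x - y) = dotv r x - dotv r y.
Proof. by rewrite dotvD dotvN. Qed.
Lemma dotv0 (r : vec) : dotv r 0 = 0.
Proof. by rewrite -(scale0r 0) dotvZ mul0r. Qed.
Lemma dotv_sum (r : vec) k (l : 'I_k -> R) (x : 'I_k -> vec) :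
  dotv r (\sum_(i < k) l i *: x i) = \sum_(i < k) l i * dotv r (x i).
Proof.
elim: k l x => [|k IH] l x; first by rewrite !big_ord0 dotv0.
by rewrite !big_ord_recr /= dotvD dotvZ IH.
Qed.
Lemma dotv_delta (r : vec) k : dotv r 'e_k = r 0 k.
Proof.
rewrite /dotv (bigD1 k) //= mxE !eqxx mulr1 big1 ?addr0 // => i ik.
by rewrite mxE eqxx /= (negbTE ik) mulr0.
Qed.

Lemma coord_le_norm (x : vec) i : `|x 0 i| <= `|x|.
Proof.
rewrite [leRHS]/Num.norm /= mx_normrE; apply/bigmax_geP; right => /=.
by exists (0, i).
Qed.

Lemma norm_le_coord (x : vec) a : 0 <= a -> (forall i, `|x 0 i| <= a) -> `|x| <= a.
Proof.
move=> a0 H; rewrite [leLHS]/Num.norm /= mx_normrE; apply/bigmax_leP; split => //=.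
by move=> [i j] _ /=; rewrite (ord1 i); exact: H.
Qed.

Lemma dotv_bound (x u : vec) : `|dotv x u| <= `|x| * \sum_(i < n) `|u 0 i|.
Proof.
rewrite /dotv mulr_sumr; apply: le_trans (ler_norm_sum _ _ _) _.
apply: ler_sum => i _; rewrite normrM ler_wpM2r //; exact: coord_le_norm.
Qed.

Lemma enorm_le (x : vec) : enorm x <= n%:R * `|x|.
Proof.
rewrite /enorm -[leRHS]ger0_norm ?mulr_ge0 // -sqrtr_sqr ler_sqrt ?sqr_ge0 //.
rewrite /dotv exprMn.
apply: (@le_trans _ _ (\sum_(i < n) `|x| ^+ 2)).
  apply: ler_sum => i _; rewrite -expr2 -real_normK ?num_real //.
  by rewrite lerXn2r ?nnegrE ?coord_le_norm.
rewrite sumr_const card_ord -[`|x| ^+ 2 *+ n]mulr_natl ler_wpM2r ?sqr_ge0 //.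
rewrite -natrX ler_nat; case: n => // m; rewrite expnS leq_pmulr // expn_gt0.
Qed.

Lemma enorm0 : enorm (0 : vec) = 0.
Proof. by rewrite /enorm dotv0 sqrtr0. Qed.

End Aux.
Section Hull.
Context {R : realType} {n : nat}.
Local Notation vec := 'rV[R]_n.
Implicit Types S T : set vec.

Lemma convhull_sub S x : S x -> convhull S x.
Proof.
move=> Sx; exists 1%N, (fun=> x), (fun=> 1); split => //; split => // ; split.
  by rewrite big_ord1.
by rewrite big_ord1 scale1r.
Qed.

Lemma convhull_mono S T : S `<=` T -> convhull S `<=` convhull T.
Proof.
move=> ST p [k [x [l [Sx [l0 [l1 ->]]]]]].
by exists k, x, l; split => // i; apply: ST.
Qed.

Lemma convhull2 S x y a : convhull S x -> convhull S y -> 0 <= a <= 1 ->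
  convhull S (a *: x + (1 - a) *: y).
Proof.
move=> [k1 [x1 [l1 [S1 [l10 [l11 ->]]]]]] [k2 [x2 [l2 [S2 [l20 [l21 ->]]]]]].
move=> /andP[a0 a1].
exists (k1 + k2)%N.
exists (fun i => match @fintype.split k1 k2 i with inl j => x1 j | inr j => x2 j end).
exists (fun i => match @fintype.split k1 k2 i with inl j => a * l1 j | inr j => (1 - a) * l2 j end).
split; first by move=> i; case: (@fintype.split k1 k2 i).
split; first by move=> i; case: (@fintype.split k1 k2 i) => j; apply: mulr_ge0 => //; rewrite subr_ge0.
have sl : forall j, @fintype.split k1 k2 (lshift k2 j) = inl j.
  by move=> j; apply: (unsplitK (inl j : 'I_k1 + 'I_k2)).
have sr : forall j, @fintype.split k1 k2 (rshift k1 j) = inr j.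
  by move=> j; apply: (unsplitK (inr j : 'I_k1 + 'I_k2)).
split.
  rewrite big_split_ord /=.
  under eq_bigr do rewrite sl.
  under [X in _ + X]eq_bigr do rewrite sr.
  by rewrite -!mulr_sumr l11 l21 !mulr1 addrC subrK.
apply/esym; rewrite big_split_ord /=.
under eq_bigr do rewrite sl.
under [X in _ + X]eq_bigr do rewrite sr.
by rewrite !scaler_sumr; congr (_ + _); apply: eq_bigr => i _; rewrite scalerA.
Qed.

Lemma convhull_convex S k (y : 'I_k -> vec) (l : 'I_k -> R) :
  (forall i, convhull S (y i)) -> (forall i, 0 <= l i) -> \sum_(i < k) l i = 1 ->
  convhull S (\sum_(i < k) l i *: y i).
Proof.
elim: k y l => [|k IH] y l Sy l0 l1.
  by move: l1; rewrite big_ord0 => /eqP; rewrite eq_sym oner_eq0.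
rewrite big_ord_recl; move: l1; rewrite big_ord_recl => l1.
set s := \sum_(i < k) l (lift ord0 i) in l1 *.
have s0 : 0 <= s by apply: sumr_ge0 => i _.
have [s_eq0|s_ne0] := eqVneq s 0.
  have H := psumr_eq0P (fun i _ => l0 (lift ord0 i)) s_eq0.
  rewrite big1 ?addr0; last by move=> i _; rewrite H // scale0r.
  by move: l1; rewrite s_eq0 addr0 => ->; rewrite scale1r.
have -> : \sum_(i < k) l (lift ord0 i) *: y (lift ord0 i) =
    (1 - l ord0) *: \sum_(i < k) (l (lift ord0 i) / s) *: y (lift ord0 i).
  rewrite scaler_sumr; apply: eq_bigr => i _; rewrite scalerA.
  by rewrite -l1 addrAC subrr add0r mulrCA mulfV // mulr1.
eapply convhull2.
- exact: Sy.
- apply: IH => // [i|]; first by rewrite divr_ge0.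
  by rewrite -mulr_suml mulfV.
- by rewrite l0 /= -l1 lerDl.
Qed.

Lemma convhull_hull S T : S `<=` convhull T -> convhull S `<=` convhull T.
Proof.
move=> ST p [k [x [l [Sx [l0 [l1 ->]]]]]].
by apply: convhull_convex => // i; apply: ST.
Qed.

End Hull.
Section Main.
Context {R : realType} {n : nat}.
Local Notation vec := 'rV[R]_n.
Variables (V W : set vec) (f : vec).

Let L := minkowski_sum (convhull V) (conehull W).
Definition LtR (T : R) := convhull (V `|` [set f + T *: w | w in W]).
Definition Qs := [set r : vec | (forall v, V v -> dotv r (v - f) <= 1) /\
   (forall w, W w -> dotv r w <= 0)].
Definition Qt (T : R) := [set r : vec | (forall v, V v -> dotv r (v - f) <= 1) /\
   (forall w, W w -> T * dotv r w <= 1)].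

Lemma sub_convex k (l : 'I_k -> R) (x : 'I_k -> vec) (g : vec) :
  \sum_(i < k) l i = 1 ->
  \sum_(i < k) l i *: x i - g = \sum_(i < k) l i *: (x i - g).
Proof.
move=> l1; under [RHS]eq_bigr do rewrite scalerBr.
by rewrite sumrB -scaler_suml l1 scale1r.
Qed.

Lemma dotv_convex_le (r : vec) k (l : 'I_k -> R) (x : 'I_k -> vec) (g : vec) :
  (forall i, 0 <= l i) -> \sum_(i < k) l i = 1 ->
  (forall i, dotv r (x i - g) <= 1) ->
  dotv r (\sum_(i < k) l i *: x i - g) <= 1.
Proof.
move=> l0 l1 H; rewrite sub_convex // dotv_sum -[leRHS]l1.
by apply: ler_sum => i _; rewrite -[leRHS]mulr1 ler_wpM2l.
Qed.

Lemma dotv_cone_le (r : vec) k (l : 'I_k -> R) (x : 'I_k -> vec) :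
  (forall i, 0 <= l i) -> (forall i, dotv r (x i) <= 0) ->
  dotv r (\sum_(i < k) l i *: x i) <= 0.
Proof.
move=> l0 H; rewrite dotv_sum; apply: sumr_le0 => i _.
by rewrite mulr_ge0_le0.
Qed.

Lemma cone_cons c w s : conehull W c -> W w -> 0 <= s -> conehull W (s *: w + c).
Proof.
move=> [k [x [l [Wx [l0 ->]]]]] Ww s0.
exists k.+1, (ocons w x), (ocons s l); split.
  by move=> i; rewrite /ocons; case: unlift.
split; first by move=> i; rewrite /ocons; case: unlift.
by apply/esym; rewrite big_ord_recl ocons0 ocons0; under eq_bigr do rewrite !oconsS.
Qed.

Lemma cone0 : conehull W 0.
Proof. by exists 0%N, (fun=> 0), (fun=> 0); rewrite big_ord0; split => // -[]. Qed.

Lemma polar_Lt_sub T : polar (translate (LtR T) f) `<=` Qt T.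
Proof.
move=> r Hr; split.
  move=> v Vv; apply: Hr; exists v => //; apply: convhull_sub; by left.
move=> w Ww; rewrite -dotvZ; apply: Hr; exists (f + T *: w).
  by apply: convhull_sub; right; exists w.
by rewrite addrC addKr.
Qed.

Lemma Q_sub_polarL : Qs `<=` polar (translate L f).
Proof.
move=> r [H1 H2] _ [_ [a [k [x [l [Vx [l0 [l1 ->]]]]]] [c Wc <-]] <-].
move: Wc => [k' [x' [l' [Wx' [l0' ->]]]]].
rewrite addrAC dotvD -[leRHS]addr0; apply: lerD.
  by apply: dotv_convex_le => // i; apply: H1.
by apply: dotv_cone_le => // i; apply: H2.
Qed.

Lemma polarL_sub_Q : L f -> polar (translate L f) `<=` Qs.
Proof.
move=> [a Va [c Wc fE]] r Hr; split.
  move=> v Vv; apply: Hr; exists v => //; exists v; first exact: convhull_sub.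
  by exists 0; [exact: cone0 | rewrite addr0].
move=> w Ww; rewrite leNgt; apply/negP => d0.
have /Hr : translate L f ((2 / dotv r w) *: w).
  exists (f + (2 / dotv r w) *: w); last by rewrite addrC addKr.
  exists a => //; exists ((2 / dotv r w) *: w + c).
    by apply: cone_cons => //; rewrite divr_ge0 // ltW.
  by rewrite -fE -addrA (addrC c).
by rewrite dotvZ mulfVK ?gt_eqF //; lra.
Qed.

Lemma Qt_sub_polarLt T : Qt T `<=` polar (translate (LtR T) f).
Proof.
move=> r [H1 H2] _ [_ [k [x [l [Sx [l0 [l1 ->]]]]]] <-].
apply: dotv_convex_le => // i; case: (Sx i) => [/H1 //|[w Ww <-]].
by rewrite addrC addKr dotvZ H2.
Qed.

Lemma Q_sub_Qt T : 0 <= T -> Qs `<=` Qt T.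
Proof.
move=> T0 r [H1 H2]; split => // w Ww.
by apply: le_trans ler01; rewrite mulr_ge0_le0 ?H2.
Qed.

Lemma Qt_mono T1 T2 : 0 <= T1 -> T1 <= T2 -> Qt T2 `<=` Qt T1.
Proof.
move=> T10 T12 r [H1 H2]; split => // w Ww.
have [d0|d0] := leP (dotv r w) 0.
  by apply: le_trans ler01; rewrite mulr_ge0_le0.
by apply: le_trans (H2 _ Ww); rewrite ler_wpM2r // ltW.
Qed.


Lemma rep_props p : L p -> exists B, 0 <= B /\
  (forall T, 1 <= T -> exists c, 1 <= c /\ c <= 1 + B /\ LtR T (f + c^-1 *: (p - f))) /\
  (forall T, 1 <= T -> forall r, Qt T r -> dotv r (p - f) <= 1 + B).
Proof.
move=> [v Vv [_ [k [w [mu [Ww [mu0 ->]]]]] <-]].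
exists (\sum_(j < k) mu j); split; first exact: sumr_ge0.
split.
  move=> T T1; have T0 : 0 < T by apply: lt_le_trans ltr01 T1.
  set B := \sum_(j < k) mu j.
  have B0 : 0 <= B by exact: sumr_ge0.
  pose c := 1 + B / T.
  have c1 : 1 <= c by rewrite lerDl divr_ge0 // ltW.
  have c0 : 0 < c by apply: lt_le_trans ltr01 c1.
  exists c; split => //; split.
    by rewrite lerD2l ler_pdivrMr // ler_peMr.
  have hBc : B / (T * c) = 1 - c^-1.
    rewrite /c; field; apply/andP; split; first by rewrite gt_eqF.
    by rewrite gt_eqF // ltr_pwDl.
  have -> : f + c^-1 *: (v + \sum_(j < k) mu j *: w j - f) =
      \sum_(i < k.+1) ocons c^-1 (fun j => mu j / (T * c)) i *:
                      ocons v (fun j => f + T *: w j) i.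
    apply/esym; rewrite big_ord_recl !ocons0; under eq_bigr do rewrite !oconsS.
    have -> : \sum_(i < k) mu i / (T * c) *: (f + T *: w i) =
        (B / (T * c)) *: f + c^-1 *: \sum_(i < k) mu i *: w i.
      rewrite mulr_suml scaler_suml scaler_sumr -big_split; apply: eq_bigr => i _.
      rewrite scalerDr !scalerA; congr (_ + _); congr (_ *: _).
      rewrite invfM; field; by rewrite !gt_eqF.
    rewrite hBc; apply/rowP => i; rewrite !mxE; ring.
  apply: convhull_convex.
  - move=> i; rewrite /ocons; case: unlift => [j|].
      by apply: convhull_sub; right; exists (w j).
    by apply: convhull_mono Vv => x Vx; left.
  - move=> i; rewrite /ocons; case: unlift => [j|]; last by rewrite invr_ge0 ltW.
    by rewrite divr_ge0 // mulr_ge0 // ltW.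
  - rewrite big_ord_recl ocons0; under eq_bigr do rewrite oconsS.
    by rewrite -mulr_suml -/B hBc addrC subrK.
move=> T T1 r [H1 H2].
rewrite addrAC dotvD; apply: lerD.
  move: Vv => [k' [x [l [Vx [l0 [l1 ->]]]]]].
  by apply: dotv_convex_le => // i; apply: H1.
rewrite dotv_sum; apply: ler_sum => j _; rewrite -[leRHS]mulr1 ler_wpM2l //.
have [d0|d0] := leP (dotv r (w j)) 0; first by apply: le_trans d0 ler01.
by apply: le_trans (H2 _ (Ww j)); rewrite ler_peMl // ltW.
Qed.


Definition uv (k : 'I_n) (s : bool) : vec := if s then 'e_k else - 'e_k.

Lemma box_data : interior L f -> exists delta B, 0 < delta /\ 0 <= B /\
  forall k s,
  (forall T, 1 <= T -> exists c, 1 <= c /\ c <= 1 + B /\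
      LtR T (f + (c^-1 * delta) *: uv k s)) /\
  (forall T, 1 <= T -> forall r, Qt T r -> delta * dotv r (uv k s) <= 1 + B).
Proof.
move=> /nbhs_ballP [e e0 He].
have d0 : 0 < e / 2 by rewrite divr_gt0.
have H : forall ks : 'I_n * bool, exists B, 0 <= B /\
  (forall T, 1 <= T -> exists c, 1 <= c /\ c <= 1 + B /\
      LtR T (f + (c^-1 * (e / 2)) *: uv ks.1 ks.2)) /\
  (forall T, 1 <= T -> forall r, Qt T r -> (e / 2) * dotv r (uv ks.1 ks.2) <= 1 + B).
  move=> [k s].
  have Lp : L (f + (e / 2) *: uv k s).
    apply: He; rewrite -ball_normE /ball_ /= opprD addNKr normrN.
    have he : e / 2 < e by rewrite ltr_pdivrMr // ltr_pMr // ltr1n.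
    apply: (le_lt_trans _ he).
    apply: norm_le_coord => [|i]; first exact: ltW.
    rewrite mxE normrM (ger0_norm (ltW d0)) -[leRHS]mulr1; apply: ler_wpM2l; first exact: ltW.
    rewrite /uv; case: s; rewrite !mxE ?normrN; case: (_ && _);
      by rewrite ?normr1 ?normr0 ?ler01.
  have [B [B0 [H1 H2]]] := rep_props _ Lp.
  exists B; split => //; split.
    move=> T T1; have [c [c1 [cB Hc]]] := H1 T T1; exists c; split => //; split => //.
    by move: Hc; rewrite addrAC subrr add0r scalerA.
  by move=> T T1 r Hr; rewrite -dotvZ; move: (H2 T T1 r Hr); rewrite addrAC subrr add0r.
have [Bf HB] := choice H.
exists (e / 2), (\sum_ks Bf ks); split => //; split; first by apply: sumr_ge0 => ks _; case: (HB ks).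
have Ble : forall ks, Bf ks <= \sum_ks Bf ks.
  move=> ks; rewrite (bigD1 ks) //= lerDl; apply: sumr_ge0 => j _; by case: (HB j).
move=> k s; have [_ [H1 H2]] := HB (k, s); split.
  move=> T T1; have [c [c1 [cB Hc]]] := H1 T T1; exists c; split => //; split => //.
  by apply: le_trans cB _; rewrite lerD2l Ble.
by move=> T T1 r Hr; apply: le_trans (H2 T T1 r Hr) _; rewrite lerD2l (Ble (k, s)).
Qed.

Lemma seg (S : set vec) (g u : vec) a b : convhull S g -> convhull S (g + a *: u) ->
  0 < a -> 0 <= b <= a -> convhull S (g + b *: u).
Proof.
move=> Hg Hau a0 /andP[b0 ba].
have H : 0 <= b / a <= 1.
  by apply/andP; split; [rewrite divr_ge0 // ltW | rewrite ler_pdivrMr // mul1r].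
have := @convhull2 R n S _ _ (b / a) Hau Hg H.
suff -> : b / a *: (g + a *: u) + (1 - b / a) *: g = g + b *: u by [].
apply/rowP => i; rewrite !mxE; field; by rewrite gt_eqF.
Qed.

Lemma part1 T : interior L f -> 1 <= T -> interior (LtR T) f.
Proof.
move=> Lf T1.
have fL : L f := nbhs_singleton Lf.
have fLt : LtR T f.
  have [B [_ [H1 _]]] := rep_props _ fL.
  have [c [_ [_ Hc]]] := H1 T T1.
  by move: Hc; rewrite subrr scaler0 addr0.
have [d [B [d0 [B0 HB]]]] := box_data Lf.
have B1 : 0 < 1 + B by rewrite ltr_pwDl.
set m := d / (1 + B).
have m0 : 0 < m by rewrite divr_gt0.
have Hm : forall k s, LtR T (f + m *: uv k s).
  move=> k s; have [[c [c1 [cB Hc]]] _] := ((HB k s).1 T T1, tt).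
  have c0 : 0 < c by apply: lt_le_trans ltr01 c1.
  apply: seg fLt Hc _ _; first by rewrite mulr_gt0 // invr_gt0.
  apply/andP; split; first exact: ltW.
  rewrite /m mulrC; apply: ler_wpM2r; first exact: ltW.
  by rewrite lef_pV2 ?posrE.
apply/nbhs_ballP; exists (m / (n.+1)%:R) => [|x]; first by rewrite /= divr_gt0.
rewrite -ball_normE /ball_ /= => hx.
have hx' : `|x - f| < m / (n.+1)%:R by rewrite distrC.
set d_ := fun k => (x - f) 0 k.
have dk : forall k, `|d_ k| <= m / (n.+1)%:R.
  by move=> k; apply: le_trans (coord_le_norm _ _) (ltW hx').
set S := \sum_k `|d_ k| / m.
have S1 : S <= 1.
  apply: (@le_trans _ _ (\sum_(k < n) (n.+1)%:R^-1)).
    apply: ler_sum => k _.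
    apply: le_trans (ler_wpM2r _ (dk k)) _; first by rewrite invr_ge0 ltW.
    by rewrite mulrAC mulfV ?gt_eqF // mul1r.
  rewrite sumr_const card_ord -[_ *+ n]mulr_natr mulrC ler_pdivrMr ?ltr0Sn // mul1r ler_nat.
  exact: leqnSn.
have S0 : 0 <= S by apply: sumr_ge0 => k _; rewrite divr_ge0 // ltW.
have xE : x = \sum_(i < n.+1) ocons (1 - S) (fun k => `|d_ k| / m) i *:
    ocons f (fun k => f + m *: uv k (0 <= d_ k)) i.
  rewrite big_ord_recl !ocons0; under eq_bigr do rewrite !oconsS.
  have -> : \sum_(k < n) `|d_ k| / m *: (f + m *: uv k (0 <= d_ k)) = S *: f + (x - f).
    rewrite [in RHS](row_sum_delta (x - f)) /S scaler_suml -big_split.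
    apply: eq_bigr => k _ /=.
    rewrite scalerDr scalerA mulfVK ?gt_eqF //; congr (_ + _).
    rewrite /uv; case: ifP => h; first by rewrite ger0_norm.
    by rewrite ltr0_norm ?ltNge ?h // scaleNr scalerN opprK.
  apply/rowP => i; rewrite !mxE; ring.
rewrite xE; apply: convhull_convex.
- move=> i; rewrite /ocons; case: unlift => [j|] //; exact: Hm.
- move=> i; rewrite /ocons; case: unlift => [j|]; last by rewrite subr_ge0.
  by rewrite divr_ge0 // ltW.
- rewrite big_ord_recl ocons0; under eq_bigr do rewrite oconsS.
  by rewrite -/S subrK.
Qed.

Lemma part2 t : interior L f -> (1 <= t)%N -> LtR t%:R `<=` LtR t.+1%:R.
Proof.
move=> Lf t1.
have fLt : LtR t.+1%:R f.
  by apply: nbhs_singleton; apply: part1 => //; rewrite ler1n.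
apply: convhull_hull => p [Vp | [w Ww <-]].
  by apply: convhull_sub; left.
have ht : 0 < t.+1%:R :> R by rewrite ltr0Sn.
have Ha : 0 <= (t%:R / t.+1%:R : R) <= 1.
  apply/andP; split; first by rewrite divr_ge0.
  by rewrite ler_pdivrMr // mul1r ler_nat.
have E : t%:R / t.+1%:R *: (f + t.+1%:R *: w) + (1 - t%:R / t.+1%:R) *: f =
  f + t%:R *: w.
  apply/rowP => i; rewrite !mxE -addn1 natrD; field.
  by rewrite gt_eqF // ltr_wpDl.
rewrite -E; apply: convhull2 => //.
by apply: convhull_sub; right; exists w.
Qed.

Lemma dotvC (r x : vec) : dotv r x = dotv x r.
Proof. by apply: eq_bigr => i _; rewrite mulrC. Qed.

Lemma cluster_dotv (F : set_system vec) (c u : vec) (beta : R) :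
  cluster F c -> F [set y | dotv y u <= beta] -> dotv c u <= beta.
Proof.
move=> Fc FA; rewrite leNgt; apply/negP => hc.
set K := \sum_(i < n) `|u 0 i|.
have K0 : 0 <= K by apply: sumr_ge0.
set eta := (dotv c u - beta) / (K + 1).
have eta0 : 0 < eta by rewrite divr_gt0 ?subr_gt0 // ltr_wpDl.
have [y [Ay By]] := Fc _ _ FA (nbhsx_ballx c eta eta0).
move: Ay => /= Ay.
move: By; rewrite -ball_normE /ball_ /= => hy.
have h1 : dotv c u - dotv y u <= `|c - y| * K.
  by rewrite dotvC [dotv y u]dotvC -dotvB dotvC; apply: le_trans (ler_norm _) (dotv_bound _ _).
have h2 : `|c - y| * K <= eta * K by apply: ler_wpM2r => //; exact: ltW.
have h3 : eta * K < dotv c u - beta.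
  rewrite /eta mulrAC ltr_pdivrMr ?ltr_wpDl // mulrDr mulr1 ltrDl subr_gt0 //.
lra.
Qed.

Lemma part3 : interior L f ->
  (dist_f f (LtR t%:R) L)%E @[t --> \oo] --> 0%E.
Proof.
move=> Lf.
have fL : L f := nbhs_singleton Lf.
have [d [B [d0 [B0 HB]]]] := box_data Lf.
set M := (1 + B) / d.
have Hbox : forall T, 1 <= T -> forall r, Qt T r -> forall k, `|r 0 k| <= M.
  move=> T T1 r Hr k; rewrite ler_norml.
  have h1 := (HB k true).2 T T1 r Hr; have h2 := (HB k false).2 T T1 r Hr.
  move: h1 h2; rewrite /uv dotvN dotv_delta => h1 h2.
  rewrite /M ler_pdivlMr //; apply/andP; split; last by rewrite mulrC.
  by rewrite lerNl ler_pdivlMr // mulrC.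
set K := [set v : vec | forall i, `[(- M), M]%classic (v ord0 i)].
have Kc : compact K.
  by apply: (@rV_compact _ _ (fun=> `[(- M), M]%classic)) => i; apply: segment_compact.
have core : forall e, 0 < e -> exists N : nat, forall r, Qt N.+1%:R r ->
    exists2 b, Qs b & `|r - b| < e.
  move=> e e0; apply/not_existsP => Hn.
  have Hs : forall N : nat, exists r, Qt N.+1%:R r /\ forall b, Qs b -> e <= `|r - b|.
    move=> N; have := Hn N => /existsNP [r /not_implyP [Hr Hb]].
    exists r; split => // b Qb; rewrite leNgt; apply/negP => hb; apply: Hb.
    by exists b.
  have [rs Hrs] := choice Hs.
  have allF : forall A, (forall N, A (rs N)) -> (rs @ \oo) A.
    by move=> A HA; exists 0%N => // N _; exact: HA.
  have FK : (rs @ \oo) K.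
    apply: allF => N i; have [Hr _] := Hrs N.
    rewrite /= in_itv /=; rewrite -ler_norml; apply: (Hbox N.+1%:R) => //.
    by rewrite ler1n.
  have [c [_ Hc]] := Kc _ _ FK.
  have cQ : Qs c.
    split.
      move=> v Vv; apply: cluster_dotv Hc _.
      by apply: allF => N; have [[H1 _] _] := Hrs N; exact: H1.
    move=> w Ww; rewrite leNgt; apply/negP => hw.
    set N := Num.Def.trunc (dotv c w)^-1.
    have hN : N.+1%:R * dotv c w <= 1.
      rewrite -dotvZ; apply: cluster_dotv Hc _.
      exists N => // m /= Hm; have [[_ H2] _] := Hrs m.
      rewrite dotvZ.
      have : Qt N.+1%:R (rs m).
        apply: (@Qt_mono N.+1%:R m.+1%:R _ _ _ (proj1 (Hrs m))); rewrite ?ler_nat ?ltnS //.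
      by case => _ /(_ w Ww).
    have := truncnS_gt (dotv c w)^-1; rewrite -/N => hN'.
    move: hN; rewrite -ler_pdivlMr // mul1r => hN.
    by move: (lt_le_trans hN' hN); rewrite ltxx.
  have cD : forall b, Qs b -> e <= `|c - b|.
    move=> b Qb; rewrite leNgt; apply/negP => hb.
    have eta0 : 0 < e - `|c - b| by rewrite subr_gt0.
    have FA : (rs @ \oo) [set y | forall b, Qs b -> e <= `|y - b|].
      by apply: allF => N; have [_ H] := Hrs N.
    have [y [Ay By]] := Hc _ _ FA (nbhsx_ballx c _ eta0).
    move: By; rewrite -ball_normE /ball_ /= => hy.
    have := Ay b Qb.
    have : `|y - b| <= `|y - c| + `|c - b|.
      by rewrite -[y - b](subrKA c); exact: ler_normD.
    rewrite distrC in hy; lra.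
  by have := cD c cQ; rewrite subrr normr0 leNgt e0.
have claim : forall e, 0 < e -> \forall t \near \oo,
    (0 <= dist_f f (LtR t%:R) L)%E /\ (dist_f f (LtR t%:R) L <= e%:E)%E.
  move=> e e0.
  have e'0 : 0 < e / (n.+1)%:R by rewrite divr_gt0.
  have [N HN] := core _ e'0.
  exists N.+1 => // t /= Ht.
  have t1 : 1 <= t%:R :> R by rewrite ler1n; apply: leq_trans Ht.
  rewrite /dist_f /hausdorff; split.
    by apply/ereal_infP => _ [x [x0 _] <-]; rewrite lee_fin.
  apply: ereal_inf_lbound; exists e => //; split; first exact: ltW.
  split.
    move=> a Ha; have Qa := polar_Lt_sub _ _ Ha.
    have Qa' : Qt N.+1%:R a.
      by apply: (@Qt_mono N.+1%:R t%:R _ _ _ Qa); rewrite ?ler_nat.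
    have [b Qb hb] := HN a Qa'.
    exists b; first exact: Q_sub_polarL.
    apply: le_trans (enorm_le _) _.
    apply: (@le_trans _ _ (n%:R * (e / n.+1%:R))).
      by apply: ler_wpM2l => //; exact: ltW.
    rewrite mulrCA ger_pMr // ler_pdivrMr ?ltr0Sn // mul1r ler_nat.
    exact: leqnSn.
  move=> b Hb; exists b; last by rewrite subrr enorm0 ltW.
  apply: Qt_sub_polarLt; apply: Q_sub_Qt; first by apply: le_trans ler01 t1.
  exact: polarL_sub_Q.
apply/fine_cvgP; split.
  have := claim 1 ltr01; apply: filterS => t [h0 h1].
  by rewrite ge0_fin_numE // (le_lt_trans h1) // ltry.
apply/cvgrPdist_le => e e0; have := claim e e0; apply: filterS => t /=.
case: (dist_f f (LtR t%:R) L) => [x| |] //= -[]; rewrite ?lee_fin // => h0 h1.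
by rewrite sub0r normrN ger0_norm.
Qed.
End Main.

Theorem lemma4p1 (R : realType) (n : nat) (V W : set 'rV[R]_n) (f : 'rV[R]_n) :
  finite_set V -> V !=set0 ->
  finite_set W -> W !=set0 -> ~ W 0 ->
  let L := minkowski_sum (convhull V) (conehull W) in
  let Lt := fun t : nat => convhull (V `|` [set f + t%:R *: w | w in W]) in
  interior L f ->
  [/\ (forall t : nat, (1 <= t)%N -> interior (Lt t) f),
      (forall t : nat, (1 <= t)%N -> Lt t `<=` Lt t.+1) &
      (dist_f f (Lt t) L)%E @[t --> \oo] --> 0%E].
Proof.
move=> _ _ _ _ _ L Lt Lf; split.
- by move=> t t1; apply: (@part1 R n V W f t%:R Lf); rewrite ler1n.
- by move=> t t1; exact: (@part2 R n V W f t Lf t1).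
- exact: (@part3 R n V W f Lf).
Qed.
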